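(* Let $$B= \begin{pmatrix} 1& 2& 2\\ 2&1& 2\\ 2&2& 3 \end{pmatrix}.$$ For every positive integer $n$, writing $B^n(3,4,5)^\top=(x,y,z)^\top$, the circumradius of the triangle with side lengths $x,y,z$ is $$R_n=\frac{(5\sqrt{2}-7)(3-2\sqrt{2})^n+(5\sqrt{2}+7)(3+2\sqrt{2})^n}{4\sqrt{2}}.$$
   Context: Triples are regarded as row vectors and $\top$ denotes transpose. The triple $B^n(3,4,5)^\top$ is a primitive Pythagorean triple (positive integers with $x^2+y^2=z^2$), so the triangle is a right triangle with hypotenuse $z$. *)

(* Defs.v *)
From HB Require Import structures.
From mathcomp Require Import all_boot all_order all_algebra.
From mathcomp Require Import reals.
Set Implicit Arguments. Unset Strict Implicit. Unset Printing Implicit Defensive.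
Import Order.TTheory GRing.Theory Num.Theory.
Local Open Scope ring_scope.

Definition Bmat : 'M[int]_3 :=
  \matrix_(i < 3, j < 3)
    nth 0 (nth [::] [:: [:: 1; 2; 2]; [:: 2; 1; 2]; [:: 2; 2; 3]] i) j.

Definition v345 : 'cV[int]_3 := \col_(i < 3) nth 0 [:: 3; 4; 5] i.

(* Circumradius of a triangle with side lengths a, b, c:
   R = abc / (4 * Area), with Area given by Heron's formula, i.e.
   R = abc / sqrt((a+b+c)(-a+b+c)(a-b+c)(a+b-c)). *)
Definition circumradius (R : rcfType) (a b c : R) : R :=
  a * b * c / Num.sqrt ((a + b + c) * (- a + b + c) * (a - b + c) * (a + b - c)).

(* Main.v *)
Require Import Defs.
From HB Require Import structures.
From mathcomp Require Import all_boot all_order all_algebra.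
From mathcomp Require Import reals.
From mathcomp Require Import ring lra zify.
Import Order.TTheory GRing.Theory Num.Theory.
Local Open Scope ring_scope.

Fixpoint trip (n : nat) : int * int * int :=
  match n with
  | 0%N => (3, 4, 5)
  | m.+1 => let: (x, y, z) := trip m in (x + 2*y + 2*z, 2*x + y + 2*z, 2*x + 2*y + 3*z)
  end.
Definition tx n := (trip n).1.1.
Definition ty n := (trip n).1.2.
Definition tz n := (trip n).2.

Lemma trip_S n : [/\ tx n.+1 = tx n + 2 * ty n + 2 * tz n,
  ty n.+1 = 2 * tx n + ty n + 2 * tz n & tz n.+1 = 2 * tx n + 2 * ty n + 3 * tz n].
Proof. by rewrite /tx /ty /tz /=; case: (trip n) => [[x y] z]. Qed.

Lemma w_eq n : Bmat ^+ n *m v345 = \col_(i < 3) nth 0 [:: tx n; ty n; tz n] i.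
Proof.
elim: n => [|n IH].
  by rewrite expr0 mul1mx; apply/matrixP => i j; rewrite !mxE.
rewrite exprS -mulmxA IH; apply/matrixP => i j.
case: (trip_S n) => -> -> ->.
rewrite !mxE !big_ord_recl big_ord0 !mxE /=.
case: i => [[|[|[|]]] //= Hi]; rewrite /bump /=; ring.
Qed.

Lemma inv n : [/\ 0 < tx n, 0 < ty n, 0 < tz n & tx n ^+ 2 + ty n ^+ 2 = tz n ^+ 2].
Proof.
elim: n => [|n IHn]; first by [].
case: IHn => h1 h2 h3 h4.
case: (trip_S n) => -> -> ->; split; lia.
Qed.

Lemma zrec n : tz n.+2 = 6 * tz n.+1 - tz n.
Proof.
case: (trip_S n.+1) => _ _ ->; case: (trip_S n) => -> -> ->; ring.
Qed.

Section S.
Variable R : realType.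
Let s : R := Num.sqrt 2.
Lemma s2 : s ^+ 2 = 2.
Proof. by rewrite /s sqr_sqrtr // ler0n. Qed.

Definition g n : R := (5 * s - 7) * (3 - 2 * s) ^+ n + (5 * s + 7) * (3 + 2 * s) ^+ n.

Lemma g_eq n : g n = 2 * s * (tz n)%:~R.
Proof.
have ha : (3 - 2 * s) ^+ 2 = 6 * (3 - 2 * s) - 1.
  apply/eqP; rewrite -subr_eq0.
  have -> : (3 - 2 * s) ^+ 2 - (6 * (3 - 2 * s) - 1) = 4 * (s ^+ 2 - 2) by ring.
  by rewrite s2 subrr mulr0.
have hb : (3 + 2 * s) ^+ 2 = 6 * (3 + 2 * s) - 1.
  apply/eqP; rewrite -subr_eq0.
  have -> : (3 + 2 * s) ^+ 2 - (6 * (3 + 2 * s) - 1) = 4 * (s ^+ 2 - 2) by ring.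
  by rewrite s2 subrr mulr0.
elim/ltn_ind: n => -[|[|n]] IH.
- rewrite /g /tz /=. ring.
- rewrite /g /tz /=. ring.
- have h1 := IH n.+1 (ltnSn _); have h0 := IH n (leqW (ltnSn _)).
  have -> : g n.+2 = 6 * g n.+1 - g n.
    rewrite /g.
    have e : forall c : R, c ^+ n.+2 = c ^+ n * c ^+ 2 by move=> c; rewrite -exprD addn2.
    rewrite !e ha hb !exprS. ring.
  rewrite h1 h0 zrec intrB intrM. ring.
Qed.
End S.

Theorem mainTheorem8 (R : realType) (n : nat) (hn : (0 < n)%N) :
  let w := Bmat ^+ n *m v345 in
  let x : R := (w ord0 ord0)%:~R in
  let y : R := (w (inord 1) ord0)%:~R in
  let z : R := (w (inord 2) ord0)%:~R in
  circumradius x y z =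
    ((5 * Num.sqrt 2 - 7) * (3 - 2 * Num.sqrt 2) ^+ n
     + (5 * Num.sqrt 2 + 7) * (3 + 2 * Num.sqrt 2) ^+ n) / (4 * Num.sqrt 2).
Proof.
move=> w x y z; rewrite /x /y /z /w w_eq !mxE.
rewrite (inordK (_ : (1 < 3)%N)) // (inordK (_ : (2 < 3)%N)) //=.
have [hx hy hz hp] := inv n.
have E := g_eq R n; rewrite /g in E; rewrite E.
have hp' : ((tx n)%:~R : R) ^+ 2 + (ty n)%:~R ^+ 2 = (tz n)%:~R ^+ 2.
  by rewrite -!rmorphXn -rmorphD /= hp.
have hX : 0 < ((tx n)%:~R : R) by rewrite ltr0z.
have hY : 0 < ((ty n)%:~R : R) by rewrite ltr0z.
have hs : 0 < Num.sqrt (2 : R) by rewrite sqrtr_gt0 ltr0n.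
move: hp' hX hY hs.
set X := ((tx n)%:~R : R); set Y := ((ty n)%:~R : R); set Z := ((tz n)%:~R : R).
set s := Num.sqrt (2 : R) => hp' hX hY hs.
rewrite /circumradius.
have -> : (X + Y + Z) * (- X + Y + Z) * (X - Y + Z) * (X + Y - Z) = (2 * X * Y) ^+ 2.
  have -> : (X + Y + Z) * (- X + Y + Z) * (X - Y + Z) * (X + Y - Z)
     = (2 * X * Y) ^+ 2 - (Z ^+ 2 - X ^+ 2 - Y ^+ 2) ^+ 2 by ring.
  rewrite -hp'; ring.
rewrite sqrtr_sqr ger0_norm; last by rewrite !mulr_ge0 // ltW.
field.
by repeat (apply/andP; split); apply: lt0r_neq0.
Qed.
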